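(* Let $(\mathcal{X},\rho)$ be a metric space, $\eta:\mathcal{X}\to\mathcal{Y}$ a function, and $U\subset\mathcal{X}$ a mutually-labeling set for $\eta$. Let $\mathbb{X}=(X_n)_{n\ge0}$ be an arbitrary process (or sequence) in $\mathcal{X}$ and $(\tilde X_n)_{n\ge1}$ any nearest neighbor process of it. Then \[\sum_{n=1}^\infty\mathbb{1}\{X_n\in U\text{ and }\eta(X_n)\ne\eta(\tilde X_n)\}\le1.\]
   Context: $\mathrm{margin}_\eta(x)=\inf\{\rho(x,x'):\eta(x')\ne\eta(x)\}$ (infimum of empty set $=+\infty$). A set $U$ is mutually-labeling for $\eta$ if $\mathrm{diam}(U)<\mathrm{margin}_\eta(x)$ for all $x\in U$, where $\mathrm{diam}(U)=\sup_{z,z'\in U}\rho(z,z')$. A nearest neighbor process is any $(\tilde X_n)_{n\ge1}$ with $\tilde X_n\in\arg\min_{x\in\{X_0,\dots,X_{n-1}\}}\rho(X_n,x)$. *)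

(* Defs.v *)
From HB Require Import structures.
From mathcomp Require Import all_boot all_order all_algebra.
From mathcomp Require Import boolp classical_sets reals constructive_ereal ereal.
Set Implicit Arguments. Unset Strict Implicit. Unset Printing Implicit Defensive.
Import Order.TTheory GRing.Theory Num.Theory.
Local Open Scope classical_set_scope.
Local Open Scope ring_scope.

Definition is_metric (R : realType) (X : Type) (rho : X -> X -> R) : Prop :=
  [/\ (forall x y, 0 <= rho x y),
      (forall x y, rho x y = 0 <-> x = y),
      (forall x y, rho x y = rho y x) &
      (forall x y z, rho x z <= rho x y + rho y z)].

(* margin_eta(x) = inf { rho(x,x') : eta x' <> eta x }, inf of empty set = +oo *)
Definition margin (R : realType) (X Y : Type) (rho : X -> X -> R)
    (eta : X -> Y) (x : X) : \bar R :=
  ereal_inf [set (rho x x')%:E | x' in [set x' | eta x' <> eta x]].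

Definition diam (R : realType) (X : Type) (rho : X -> X -> R) (U : set X) : \bar R :=
  ereal_sup [set (rho z z')%:E | z in U & z' in U].

Definition mutually_labeling (R : realType) (X Y : Type) (rho : X -> X -> R)
    (eta : X -> Y) (U : set X) : Prop :=
  forall x, U x -> (diam rho U < margin rho eta x)%E.

Definition nn_process (R : realType) (X : Type) (rho : X -> X -> R)
    (Xs Xt : nat -> X) : Prop :=
  forall n, (1 <= n)%N ->
    (exists2 i, (i < n)%N & Xt n = Xs i) /\
    (forall j, (j < n)%N -> rho (Xs n) (Xt n) <= rho (Xs n) (Xs j)).

(* Main.v *)
Require Import Defs.
From HB Require Import structures.
From mathcomp Require Import all_boot all_order all_algebra.
From mathcomp Require Import boolp classical_sets reals constructive_ereal ereal.
Import Order.TTheory GRing.Theory Num.Theory.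
Local Open Scope classical_set_scope.

Lemma key (R : realType) (X Y : Type) (rho : X -> X -> R) (eta : X -> Y)
    (U : set X) (Xs Xt : nat -> X) :
  mutually_labeling rho eta U -> nn_process rho Xs Xt ->
  forall m n, (m < n)%N -> U (Xs m) -> U (Xs n) -> eta (Xs n) <> eta (Xt n) -> False.
Proof.
move=> ML NN m n mn Um Un ne.
have n1 : (1 <= n)%N by apply: leq_ltn_trans mn.
have [_ H] := NN n n1.
have h1 := H m mn.
have h2 := ML _ Un.
have h3 : (margin rho eta (Xs n) <= (rho (Xs n) (Xt n))%:E)%E.
  apply: ereal_inf_lbound; exists (Xt n) => //=; by move=> e; apply: ne.
have h4 : ((rho (Xs n) (Xs m))%:E <= diam rho U)%E.
  apply: ereal_sup_ubound; exists (Xs n) => //; exists (Xs m) => //.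
have : ((rho (Xs n) (Xt n))%:E < (rho (Xs n) (Xt n))%:E)%E.
  apply: (le_lt_trans _ (lt_le_trans h2 h3)).
  apply: le_trans h4; by rewrite lee_fin.
by rewrite ltxx.
Qed.

Theorem lemma2 (R : realType) (X Y : Type) (rho : X -> X -> R) (eta : X -> Y)
    (U : set X) (Xs Xt : nat -> X) :
  is_metric rho -> mutually_labeling rho eta U -> nn_process rho Xs Xt ->
  forall N : nat,
    (\sum_(1 <= n < N.+1) (`[< U (Xs n) /\ eta (Xs n) <> eta (Xt n) >] : nat) <= 1)%N.
Proof.
move=> _ ML NN; elim=> [|N IH]; first by rewrite big_geq.
rewrite big_nat_recr //=.
case: asboolP => [[Un ne]|_]; last by rewrite addn0.
rewrite big1_seq ?add0n // => i /andP[_]; rewrite mem_index_iota => /andP[_ iN].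
case: asboolP => // [[Ui _]].
by case: (@key _ _ _ _ _ _ _ _ ML NN _ _ iN Ui Un ne).
Qed.
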